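(* Let $\gamma\in\,]0,+\infty[$ and let $h\colon\mathbb{R}\to\mathbb{R}\colon v\mapsto\log(1+\exp(-v))$. Then, as $v\to-\infty$, $$\mathrm{prox}_{\gamma h}(v)=v+\gamma\big(1-\exp(\gamma+v)+(1+\gamma)\exp(2(\gamma+v))\big)+o(\exp(2v)),$$ where $o(\exp(2v))$ denotes a function $F$ with $F(v)/\exp(2v)\to0$ as $v\to-\infty$.
   Context: For a convex function $\psi\colon\mathbb{R}\to\mathbb{R}$, $\mathrm{prox}_\psi(v)$ is the unique minimizer over $p\in\mathbb{R}$ of $\frac12(p-v)^2+\psi(p)$. *)

(* Defs.v *)
From Stdlib Require Import Reals Lra ClassicalEpsilon.
Open Scope R_scope.

Definition is_prox_point (psi : R -> R) (v p : R) : Prop :=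
  forall q : R, 1/2 * (p - v)^2 + psi p <= 1/2 * (q - v)^2 + psi q.

(* prox_psi(v): the (unique, for convex psi) minimizer, selected by Hilbert's epsilon. *)
Definition prox (psi : R -> R) (v : R) : R :=
  epsilon (inhabits 0) (is_prox_point psi v).

Definition h (v : R) : R := ln (1 + exp (- v)).

(* Main.v *)
Require Import Defs.
From Stdlib Require Import Reals Lra ClassicalEpsilon.
From Coquelicot Require Import Coquelicot.
Open Scope R_scope.

Definition Fo (g v q : R) := 1/2 * (q - v)^2 + g * h q.
Definition df (g v x : R) := x - v - g / (1 + exp x).

Lemma Fo_derive g v x : is_derive (Fo g v) x (df g v x).
Proof.
  unfold Fo, df, h.
  auto_derive.
  - pose proof (exp_pos (-x)); lra.
  - rewrite exp_Ropp. pose proof (exp_pos x). field. lra.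
Qed.

Lemma Fo_cont g v x : continuity_pt (Fo g v) x.
Proof.
  apply continuity_pt_filterlim. apply (ex_derive_continuous (K:=R_AbsRing) (V:=R_NormedModule)).
  eexists. apply Fo_derive.
Qed.

Lemma Fo_mvt g v a b : exists c, Rmin a b <= c <= Rmax a b /\
   Fo g v b - Fo g v a = df g v c * (b - a).
Proof.
  apply MVT_gen.
  - intros; apply Fo_derive.
  - intros; apply Fo_cont.
Qed.

Lemma df_mono g v x y : 0 < g -> x < y -> df g v x < df g v y.
Proof.
  intros Hg Hxy. unfold df.
  assert (exp x < exp y) by (apply exp_increasing; auto).
  pose proof (exp_pos x).
  assert (g / (1 + exp y) <= g / (1 + exp x)).
  { unfold Rdiv. apply Rmult_le_compat_l; [lra|].
    apply Rinv_le_contravar; lra. }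
  lra.
Qed.

Lemma df_mono_le g v x y : 0 < g -> x <= y -> df g v x <= df g v y.
Proof.
  intros Hg [H|H]; [left; apply df_mono; auto| subst; lra].
Qed.

Lemma Fo_min g v p : 0 < g -> df g v p = 0 -> forall q, Fo g v p <= Fo g v q.
Proof.
  intros Hg Hp q.
  destruct (Fo_mvt g v p q) as [c [Hc E]].
  destruct (Rle_lt_dec p q) as [Hl|Hl].
  - rewrite Rmin_left in Hc by lra.
    pose proof (df_mono_le g v p c Hg (proj1 Hc)).
    assert (0 <= df g v c * (q - p)) by (apply Rmult_le_pos; lra). lra.
  - rewrite Rmax_left in Hc by lra.
    pose proof (df_mono_le g v c p Hg (proj2 Hc)).
    assert (0 <= - df g v c * (p - q)) by (apply Rmult_le_pos; lra). nra.
Qed.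

Lemma Fo_strict g v p : 0 < g -> df g v p = 0 -> forall q, q <> p -> Fo g v p < Fo g v q.
Proof.
  intros Hg Hp q Hq.
  set (m := (p + q) / 2).
  pose proof (Fo_min g v p Hg Hp m).
  destruct (Fo_mvt g v m q) as [c [Hc E]].
  destruct (Rle_lt_dec p q) as [Hl|Hl].
  - assert (Hpq : p < q) by lra.
    rewrite Rmin_left in Hc by (unfold m; lra).
    assert (Hpc : p < c) by (unfold m in Hc; lra).
    pose proof (df_mono g v p c Hg Hpc).
    assert (0 < df g v c * (q - m)) by (apply Rmult_lt_0_compat; unfold m; lra). lra.
  - rewrite Rmax_left in Hc by (unfold m; lra).
    assert (Hcp : c < p) by (unfold m in Hc; lra).
    pose proof (df_mono g v c p Hg Hcp).
    assert (0 < - df g v c * (m - q)) by (apply Rmult_lt_0_compat; unfold m; lra). nra.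
Qed.

Lemma df_cont g v : continuity (df g v).
Proof.
  intro x. apply continuity_pt_filterlim. apply (ex_derive_continuous (K:=R_AbsRing) (V:=R_NormedModule)).
  unfold df. auto_derive. pose proof (exp_pos x). lra.
Qed.

Lemma prox_char g v : 0 < g -> df g v (prox (fun x => g * h x) v) = 0.
Proof.
  intros Hg.
  destruct (IVT (df g v) v (v + g) (df_cont g v)) as [p [_ Hp]].
  - lra.
  - unfold df. pose proof (exp_pos v).
    assert (0 < g / (1 + exp v)) by (apply Rdiv_lt_0_compat; lra). lra.
  - unfold df. pose proof (exp_pos (v+g)).
    assert (g / (1 + exp (v+g)) < g).
    { apply Rmult_lt_reg_r with (1 + exp (v+g)); [lra|].
      unfold Rdiv. rewrite Rmult_assoc, Rinv_l by lra. nra. }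
    lra.
  - assert (Hex : exists p, is_prox_point (fun x => g * h x) v p).
    { exists p. intro q. apply (Fo_min g v p Hg Hp q). }
    pose proof (epsilon_spec (inhabits 0) _ Hex) as Hs.
    fold (prox (fun x => g * h x) v) in Hs.
    destruct (Req_dec (prox (fun x => g * h x) v) p) as [E|E].
    + rewrite E; auto.
    + exfalso. pose proof (Fo_strict g v p Hg Hp _ E).
      specialize (Hs p). unfold Fo in H. lra.
Qed.
Lemma alg g a x E : 0 < g -> 0 < a -> 0 < x -> 0 < E ->
  let u := a * x * E in let e := g * u / (1 + u) in
  1 - e <= E -> E <= / (1 + e) -> 1 - 2 * e <= E * E ->
  Rabs (g / (1 + u) - g * (1 - a * x + (1 + g) * (a * x)^2))
   <= a^3 * (2*g^3 + 3*g^2 + g) * x^3.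
Proof.
  intros Hg Ha Hx HE u e H1 H2 H3.
  assert (Hu : 0 < u) by (unfold u; repeat apply Rmult_lt_0_compat; auto).
  assert (He0 : 0 <= e) by (unfold e; apply Rlt_le, Rdiv_lt_0_compat; nra).
  assert (Heu : e <= g * u).
  { unfold e. apply Rmult_le_reg_r with (1+u); [lra|]. unfold Rdiv.
    rewrite Rmult_assoc, Rinv_l by lra. nra. }
  assert (HE1 : E <= 1).
  { apply Rle_trans with (/(1+e)); auto. rewrite <- Rinv_1. apply Rinv_le_contravar; lra. }
  assert (Hux : u <= a * x) by (unfold u; assert (0 < a*x) by nra; nra).
  set (t1 := g * a * x * (E - 1 + e)).
  set (t2 := g^2 * a * x * u^2 / (1 + u)).
  set (t3 := g^2 * a^2 * x^2 * (1 - E)).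
  set (t4 := g * a^2 * x^2 * (1 - E * E)).
  set (t5 := g * u^3 / (1 + u)).
  assert (Id : g / (1 + u) - g * (1 - a * x + (1 + g) * (a * x)^2) = - (t1+t2+t3+t4+t5)).
  { unfold t1,t2,t3,t4,t5,e,u. field. nra. }
  assert (Hr : E - 1 + e <= e * e).
  { assert (E <= 1 - e + e*e).
    { apply Rle_trans with (/(1+e)); auto.
      apply Rmult_le_reg_r with (1+e); [lra|]. rewrite Rinv_l by lra. nra. }
    lra. }
  assert (B1 : 0 <= t1 <= g^3*a^3*x^3).
  { unfold t1. split. { apply Rmult_le_pos; [nra|lra]. }
    assert (e * e <= (g*a*x)*(g*a*x)) by (apply Rmult_le_compat; nra).
    assert (0 <= g*a*x) by nra.
    apply Rle_trans with (g*a*x*(e*e)); [apply Rmult_le_compat_l; lra| nra]. }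
  assert (B2 : 0 <= t2 <= g^2*a^3*x^3).
  { unfold t2. split. { apply Rlt_le, Rdiv_lt_0_compat; [|lra]. 
      assert (0<u^2) by (apply pow_lt; lra); assert (0<g^2) by (apply pow_lt; lra); repeat apply Rmult_lt_0_compat; auto; lra. }
    apply Rle_trans with (g^2*a*x*u^2).
    { unfold Rdiv. rewrite <- (Rmult_1_r (g^2*a*x*u^2)) at 2. apply Rmult_le_compat_l.
      { repeat apply Rmult_le_pos; try apply pow_le; lra. }
      rewrite <- Rinv_1. apply Rinv_le_contravar; lra. }
    assert (u^2 <= (a*x)^2) by (apply pow_incr; lra).
    assert (0 <= g^2*a*x) by (repeat apply Rmult_le_pos; try apply pow_le; lra).
    apply Rle_trans with (g^2*a*x*(a*x)^2); [apply Rmult_le_compat_l; lra| right; ring]. }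
  assert (B3 : 0 <= t3 <= g^3*a^3*x^3).
  { unfold t3. assert (0 <= g^2*a^2*x^2) by (repeat apply Rmult_le_pos; try apply pow_le; lra).
    split. { apply Rmult_le_pos; lra. }
    assert (1 - E <= g*a*x) by nra.
    apply Rle_trans with (g^2*a^2*x^2*(g*a*x)); [apply Rmult_le_compat_l; lra| right; ring]. }
  assert (B4 : 0 <= t4 <= 2*g^2*a^3*x^3).
  { unfold t4. assert (0 <= g*a^2*x^2) by (repeat apply Rmult_le_pos; try apply pow_le; lra).
    split. { apply Rmult_le_pos; nra. }
    assert (1 - E*E <= 2*(g*a*x)) by nra.
    apply Rle_trans with (g*a^2*x^2*(2*(g*a*x))); [apply Rmult_le_compat_l; lra| right; ring]. }
  assert (B5 : 0 <= t5 <= g*a^3*x^3).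
  { unfold t5. split. { apply Rlt_le, Rdiv_lt_0_compat; [|lra].
      assert (0<u^3) by (apply pow_lt; lra); apply Rmult_lt_0_compat; auto; lra. }
    apply Rle_trans with (g*u^3).
    { unfold Rdiv. rewrite <- (Rmult_1_r (g*u^3)) at 2. apply Rmult_le_compat_l.
      { apply Rmult_le_pos; try apply pow_le; lra. }
      rewrite <- Rinv_1. apply Rinv_le_contravar; lra. }
    assert (u^3 <= (a*x)^3) by (apply pow_incr; lra).
    apply Rle_trans with (g*(a*x)^3); [apply Rmult_le_compat_l; lra| right; ring]. }
  rewrite Id, Rabs_Ropp, Rabs_right by lra. lra.
Qed.

Lemma expsq y : exp (2 * y) = exp y ^ 2.
Proof. replace (2*y) with (y+y) by ring. rewrite exp_plus. ring. Qed.

Theorem proposition3 (gamma : R) (hgamma : 0 < gamma) :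
  forall eps : R, 0 < eps ->
  exists M : R, forall v : R, v < M ->
    Rabs ((prox (fun x => gamma * h x) v
           - (v + gamma * (1 - exp (gamma + v)
                           + (1 + gamma) * exp (2 * (gamma + v)))))
          / exp (2 * v)) < eps.
Proof.
  intros eps Heps.
  set (g := gamma) in *. set (a := exp g).
  assert (Ha : 0 < a) by apply exp_pos.
  set (K := a^3 * (2*g^3 + 3*g^2 + g)).
  assert (HK : 0 < K).
  { unfold K. apply Rmult_lt_0_compat. apply pow_lt; auto.
    assert (0 < g^3) by (apply pow_lt; auto). assert (0 < g^2) by (apply pow_lt; auto). lra. }
  exists (ln (eps / K)). intros v Hv.
  set (x := exp v). assert (Hx : 0 < x) by apply exp_pos.
  assert (HxK : x < eps / K).
  { unfold x. rewrite <- (exp_ln (eps/K)) by (apply Rdiv_lt_0_compat; auto).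
    apply exp_increasing; auto. }
  pose proof (prox_char g v hgamma) as Hp.
  set (p := prox (fun x => g * h x) v) in *.
  unfold df in Hp.
  set (u := exp p) in *. assert (Hu : 0 < u) by apply exp_pos.
  set (e := g - (p - v)).
  set (E := exp (- e)).
  assert (HuE : u = a * x * E).
  { unfold u, a, x, E, e. rewrite <- !exp_plus. f_equal. ring. }
  assert (He : e = g * u / (1 + u)).
  { unfold e. replace (p - v) with (g / (1 + u)) by lra. field. lra. }
  assert (HE : 0 < E) by apply exp_pos.
  pose proof (alg g a x E hgamma Ha Hx HE) as Halg. cbv zeta in Halg.
  rewrite <- HuE, <- He in Halg.
  assert (L1 : 1 - e <= E) by (unfold E; pose proof (exp_ineq1_le (-e)); lra).
  assert (L2 : E <= / (1 + e)).
  { unfold E. rewrite exp_Ropp. apply Rinv_le_contravar.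
    - assert (0 <= e) by (rewrite He; apply Rlt_le, Rdiv_lt_0_compat; nra). lra.
    - apply exp_ineq1_le. }
  assert (L3 : 1 - 2 * e <= E * E).
  { unfold E. rewrite <- exp_plus. pose proof (exp_ineq1_le (-e + -e)). lra. }
  specialize (Halg L1 L2 L3).
  replace (p - (v + g * (1 - exp (g + v) + (1 + g) * exp (2 * (g + v)))))
    with (g / (1 + u) - g * (1 - a * x + (1 + g) * (a * x) ^ 2)).
  2:{ unfold a, x. rewrite exp_plus, expsq, exp_plus. lra. }
  rewrite expsq. fold x.
  unfold Rdiv at 1. rewrite Rabs_mult, Rabs_inv, (Rabs_right (x^2)) by (apply Rle_ge, pow_le; lra).
  assert (0 < x^2) by (apply pow_lt; lra).
  apply Rle_lt_trans with (K * x^3 * / x^2).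
  { apply Rmult_le_compat_r. apply Rlt_le, Rinv_0_lt_compat; auto. exact Halg. }
  replace (K * x^3 * / x^2) with (K * x) by (field; lra).
  apply Rmult_lt_reg_r with (/K). apply Rinv_0_lt_compat; auto.
  replace (K * x * / K) with x by (field; lra). exact HxK.
Qed.
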